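(* Let $G$ be a group acting linearly and isometrically on a real Hilbert space $M$. Let $X=t_0+\sigma\epsilon$ with $t_0\neq0$, $\sigma>0$, $\mathbb{E}(\epsilon)=0$ and $\mathbb{E}(\|X\|^2)<+\infty$. Suppose $[t_0]$ is a $C^1$ submanifold of $M$ with tangent space $T_{t_0}[t_0]$ at $t_0$. Then $\mathbb{P}(X\notin T_{t_0}[t_0]^\perp)>0$ if and only if $\mathbb{P}(\epsilon\notin T_{t_0}[t_0]^\perp)>0$, and if these hold, $[t_0]$ is not a Fréchet mean of $[X]$.
   Context: $M$ is a real Hilbert space with inner product $\langle\cdot,\cdot\rangle$ and norm $\|\cdot\|$; the action is linear and isometric ($\|g\cdot x\|=\|x\|$). $[m]=\{g\cdot m:g\in G\}$. $T_{t_0}[t_0]$ is the (linear) tangent space and $T_{t_0}[t_0]^\perp$ its orthogonal complement. $F(m)=\mathbb{E}\big(\inf_{g}\|g\cdot X-m\|^2\big)$ and $[m_\star]$ is a Fréchet mean of $[X]$ if $m_\star$ globally minimises $F$. *)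

(* Defs.v *)
From HB Require Import structures.
From mathcomp Require Import all_boot all_order all_algebra.
From mathcomp Require Import all_classical all_reals all_analysis.
Set Implicit Arguments. Unset Strict Implicit. Unset Printing Implicit Defensive.
Import Order.TTheory GRing.Theory Num.Theory.
Import numFieldNormedType.Exports.
Local Open Scope classical_set_scope.
Local Open Scope ring_scope.

Section defs.
Variables (R : realType) (M : completeNormedModType R).

(** [ip] is a (real) inner product on [M] inducing the norm of [M];
    together with completeness of [M] this makes [M] a real Hilbert space. *)
Definition is_inner_product (ip : M -> M -> R) : Prop :=
  [/\ forall (a : R) (x y z : M), ip (a *: x + y) z = a * ip x z + ip y z,
      forall x y, ip x y = ip y x &
      forall x, ip x x = `|x| ^+ 2].

Definition linear_isometric_group_action (G : Type) (mul : G -> G -> G)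
    (one : G) (inv : G -> G) (act : G -> M -> M) : Prop :=
  [/\ (forall g h k, mul g (mul h k) = mul (mul g h) k),
      (forall g, mul one g = g) &
      (forall g, mul (inv g) g = one)] /\
  [/\ (forall x, act one x = x),
      (forall g h x, act (mul g h) x = act g (act h x)),
      (forall g (a : R) x y, act g (a *: x + y) = a *: act g x + act g y) &
      (forall g x, `|act g x| = `|x|)].

Definition group_orbit (G : Type) (act : G -> M -> M) (m : M) : set M :=
  range (fun g => act g m).

Definition closed_subspace (E : set M) : Prop :=
  [/\ E 0, (forall (a : R) x y, E x -> E y -> E (a *: x + y)) & closed E].

Definition C1_on (f : M -> M) (U : set M) : Prop :=
  (forall x, U x -> differentiable f x) /\
  (forall x, U x -> forall e : R, 0 < e -> exists2 d : R, 0 < d &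
     forall y, U y -> `|y - x| < d -> forall h, `|'d f y h - 'd f x h| <= e * `|h|).

Definition submanifold_chart (S : set M) (p : M) (U : set M) (phi : M -> M)
    (E : set M) : Prop :=
  [/\ open U, U p & open (phi @` U)] /\
  [/\ C1_on phi U,
      (exists psi : M -> M, [/\ C1_on psi (phi @` U),
          (forall x, U x -> psi (phi x) = x) &
          (forall y, (phi @` U) y -> phi (psi y) = y)]),
      closed_subspace E &
      phi @` (U `&` S) = phi @` U `&` E].

Definition C1_submanifold (S : set M) : Prop :=
  forall p, S p -> exists U phi E, submanifold_chart S p U phi E.

Definition tangent_space (S : set M) (p : M) (T : set M) : Prop :=
  exists U phi E, submanifold_chart S p U phi E /\
    T = [set v | E ('d phi p v)].

Definition orth (ip : M -> M -> R) (T : set M) : set M :=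
  [set x | forall v, T v -> ip x v = 0].

Definition borel_measurable d (Omega : measurableType d) (f : Omega -> M) : Prop :=
  forall B : set M, (open : set (set M)).-sigma.-measurable B ->
    measurable (f @^-1` B).

Definition frechet_fun d (Omega : measurableType d) (P : probability Omega R)
    (G : Type) (act : G -> M -> M) (X : Omega -> M) (m : M) : \bar R :=
  (\int[P]_w (inf (range (fun g => `|act g (X w) - m| ^+ 2)))%:E)%E.

Definition is_frechet_mean d (Omega : measurableType d) (P : probability Omega R)
    (G : Type) (act : G -> M -> M) (X : Omega -> M) (m : M) : Prop :=
  forall m', (frechet_fun P act X m <= frechet_fun P act X m')%E.

End defs.

(* Main.v *)
Require Import Defs.
From HB Require Import structures.
From mathcomp Require Import all_boot all_order all_algebra.
From mathcomp Require Import all_classical all_reals all_analysis.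
From mathcomp Require Import lra.
From mathcomp Require Import measurable_realfun.
Import Order.TTheory GRing.Theory Num.Theory.
Import numFieldNormedType.Exports.
Local Open Scope classical_set_scope.
Local Open Scope ring_scope.
Set Implicit Arguments. Unset Strict Implicit. Unset Printing Implicit Defensive.
Section IP.
Variables (R : realType) (M : completeNormedModType R) (ip : M -> M -> R).
Hypothesis Hip : is_inner_product ip.

Lemma ipDZl a x y z : ip (a *: x + y) z = a * ip x z + ip y z.
Proof. by case: Hip. Qed.
Lemma ipC x y : ip x y = ip y x.
Proof. by case: Hip. Qed.
Lemma ipxx x : ip x x = `|x| ^+ 2.
Proof. by case: Hip. Qed.
Lemma ip0l z : ip 0 z = 0.
Proof.
have := ipDZl 1 0 0 z; rewrite scale1r addr0 mul1r => h; lra.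
Qed.
Lemma ipZl a x z : ip (a *: x) z = a * ip x z.
Proof. by have := ipDZl a x 0 z; rewrite addr0 ip0l addr0. Qed.
Lemma ipDl x y z : ip (x + y) z = ip x z + ip y z.
Proof. by have := ipDZl 1 x y z; rewrite scale1r mul1r. Qed.
Lemma ipNl x z : ip (- x) z = - ip x z.
Proof. by rewrite -scaleN1r ipZl mulN1r. Qed.
Lemma ipBl x y z : ip (x - y) z = ip x z - ip y z.
Proof. by rewrite ipDl ipNl. Qed.
Lemma ip0r z : ip z 0 = 0.
Proof. by rewrite ipC ip0l. Qed.
Lemma ipZr a x z : ip z (a *: x) = a * ip z x.
Proof. by rewrite ipC ipZl ipC. Qed.
Lemma ipDr x y z : ip z (x + y) = ip z x + ip z y.
Proof. by rewrite ipC ipDl !(ipC z). Qed.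
Lemma ipNr x z : ip z (- x) = - ip z x.
Proof. by rewrite ipC ipNl ipC. Qed.
Lemma ipBr x y z : ip z (x - y) = ip z x - ip z y.
Proof. by rewrite ipDr ipNr. Qed.

Lemma normB2 x y : `|x - y| ^+ 2 = `|x| ^+ 2 - 2 * ip x y + `|y| ^+ 2.
Proof.
rewrite -!ipxx ipBl !ipBr (ipC y x); lra.
Qed.
Lemma normD2 x y : `|x + y| ^+ 2 = `|x| ^+ 2 + 2 * ip x y + `|y| ^+ 2.
Proof.
rewrite -!ipxx ipDl !ipDr (ipC y x); lra.
Qed.

Lemma ip_le_half x y : 2 * `|ip x y| <= `|x| ^+ 2 + `|y| ^+ 2.
Proof.
have h1 := normB2 x y; have h2 := normD2 x y.
have p1 : 0 <= `|x - y| ^+ 2 by exact: sqr_ge0.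
have p2 : 0 <= `|x + y| ^+ 2 by exact: sqr_ge0.
case: (lerP 0 (ip x y)) => h.
  rewrite ger0_norm //; lra.
rewrite ltr0_norm //; lra.
Qed.

Lemma ip_cs x y : `|ip x y| <= `|x| * `|y|.
Proof.
have [->|x0] := eqVneq x 0; first by rewrite ip0l !normr0 mul0r.
have [->|y0] := eqVneq y 0; first by rewrite ip0r !normr0 mulr0.
have nx : 0 < `|x| by rewrite normr_gt0.
have ny : 0 < `|y| by rewrite normr_gt0.
pose k := Num.sqrt (`|y| / `|x|).
have k0 : 0 < k by rewrite sqrtr_gt0 divr_gt0.
have kk : k ^+ 2 = `|y| / `|x| by rewrite sqr_sqrtr // divr_ge0 // ltW.
have := ip_le_half (k *: x) (k^-1 *: y).
rewrite ipZl ipZr mulrA mulrV ?unitfE ?gt_eqF // mul1r !normrZ.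
have -> : `|k| = k by rewrite ger0_norm // ltW.
have -> : `|k^-1| = k^-1 by rewrite ger0_norm // invr_ge0 ltW.
rewrite !exprMn exprVn kk invf_div.
have -> : `|y| / `|x| * `|x| ^+ 2 = `|x| * `|y|.
  by rewrite expr2 mulrA divfK ?gt_eqF // mulrC.
have -> : `|x| / `|y| * `|y| ^+ 2 = `|x| * `|y|.
  by rewrite expr2 mulrA divfK ?gt_eqF.
lra.
Qed.
End IP.
Lemma sup_affine (R : realType) (G : Type) (g0 : G) (a : G -> R) (B al be : R) :
  (forall g, a g <= B) -> 0 <= al ->
  sup (range (fun g => al * a g + be)) = al * sup (range a) + be.
Proof.
move=> hB hal.
have ne : range a !=set0 by exists (a g0), g0.
have ne' : range (fun g => al * a g + be) !=set0 by exists (al * a g0 + be), g0.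
have ubA : ubound (range a) B by move=> _ [g _ <-].
have hs : has_sup (range a) by split => //; exists B.
have ubA' : ubound (range (fun g => al * a g + be)) (al * B + be).
  by move=> _ [g _ <-]; rewrite lerD2r ler_wpM2l.
have hs' : has_sup (range (fun g => al * a g + be)) by split => //; exists (al * B + be).
apply/le_anti/andP; split.
  apply: ge_sup => // _ [g _ <-]; rewrite lerD2r ler_wpM2l //.
  by apply: sup_upper_bound => //; exists g.
have [al00|al0] := eqVneq al 0.
  rewrite [X in X * _]al00 mul0r add0r; apply: (sup_upper_bound hs').
  by exists g0 => //; rewrite al00 mul0r add0r.
have alp : 0 < al by rewrite lt_def al0.
rewrite -lerBrDr -ler_pdivlMl //; apply: ge_sup => // _ [g _ <-].
rewrite ler_pdivlMl // lerBrDr; apply: sup_upper_bound => //; by exists g.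
Qed.
Section ACT.
Variables (R : realType) (M : completeNormedModType R) (ip : M -> M -> R).
Hypothesis Hip : is_inner_product ip.
Variables (G : Type) (mul : G -> G -> G) (one : G) (inv : G -> G) (act : G -> M -> M).
Hypothesis HA : linear_isometric_group_action mul one inv act.

Lemma act1 x : act one x = x. Proof. by case: HA => _ []. Qed.
Lemma actM g h x : act (mul g h) x = act g (act h x). Proof. by case: HA => _ []. Qed.
Lemma actDZ g a x y : act g (a *: x + y) = a *: act g x + act g y.
Proof. by case: HA => _ []. Qed.
Lemma act_norm g x : `|act g x| = `|x|. Proof. by case: HA => _ []. Qed.
Lemma actV g x : act (inv g) (act g x) = x.
Proof. by rewrite -actM; case: HA => -[_ _ ->] _; rewrite act1. Qed.
Lemma act0 g : act g 0 = 0.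
Proof. by apply/eqP; rewrite -normr_eq0 act_norm normr0. Qed.
Lemma actZ g a x : act g (a *: x) = a *: act g x.
Proof. by have := actDZ g a x 0; rewrite !addr0 act0 addr0. Qed.
Lemma actD g x y : act g (x + y) = act g x + act g y.
Proof. by have := actDZ g 1 x y; rewrite !scale1r. Qed.
Lemma actB g x y : act g (x - y) = act g x - act g y.
Proof. by rewrite actD -scaleN1r actZ scaleN1r. Qed.
Lemma act_ip g x y : ip (act g x) (act g y) = ip x y.
Proof.
have := normD2 Hip (act g x) (act g y); rewrite -actD !act_norm (normD2 Hip).
move=> h; lra.
Qed.

Variable t0 : M.
Definition hx (x : M) := sup (range (fun g => ip (act g x) t0)).

Lemma hx_ub0 x g : ip (act g x) t0 <= `|x| * `|t0|.
Proof. by rewrite -(act_norm g x); apply: le_trans (ler_norm _) (ip_cs Hip _ _). Qed.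

Lemma hx_has_sup x : has_sup (range (fun g => ip (act g x) t0)).
Proof.
split; first by exists (ip (act one x) t0), one.
by exists (`|x| * `|t0|) => _ [g _ <-]; exact: hx_ub0.
Qed.

Lemma hx_ge g x : ip (act g x) t0 <= hx x.
Proof. by apply: sup_upper_bound (hx_has_sup x) _ _; exists g. Qed.

Lemma hx_ge1 x : ip x t0 <= hx x.
Proof. by have := hx_ge one x; rewrite act1. Qed.

Lemma hx_le x : hx x <= `|x| * `|t0|.
Proof. by apply: ge_sup; [exists (ip (act one x) t0), one|move=> _ [g _ <-]; exact: hx_ub0]. Qed.

Lemma hx_norm x : `|hx x| <= `|x| * `|t0|.
Proof.
rewrite ler_norml hx_le andbT; apply: le_trans (hx_ge1 x).
by have := ip_cs Hip x t0; rewrite ler_norml => /andP[h _].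
Qed.

Lemma hx_lip x y : hx x <= hx y + `|x - y| * `|t0|.
Proof.
apply: ge_sup; first by exists (ip (act one x) t0), one.
move=> _ [g _ <-].
have -> : act g x = act g y + act g (x - y) by rewrite -actD addrC subrK.
rewrite (ipDl Hip); apply: lerD; first exact: hx_ge.
by rewrite -(act_norm g (x - y)); apply: le_trans (ler_norm _) (ip_cs Hip _ _).
Qed.

Lemma inf_formula x (l : R) : 0 <= l ->
  inf (range (fun g => `|act g x - l *: t0| ^+ 2)) =
  `|x| ^+ 2 + l ^+ 2 * `|t0| ^+ 2 - 2 * l * hx x.
Proof.
move=> l0; rewrite /inf.
have -> : -%R @` range (fun g => `|act g x - l *: t0| ^+ 2) =
   range (fun g => (2 * l) * ip (act g x) t0 + - (`|x| ^+ 2 + l ^+ 2 * `|t0| ^+ 2)).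
  apply/seteqP; split.
    move=> _ [z [g _ <-] <-].
    exists g => //; rewrite (normB2 Hip) act_norm normrZ exprMn (ipZr Hip) real_normK ?num_real //.
    lra.
  move=> _ [g _ <-].
  exists (`|act g x - l *: t0| ^+ 2); first by exists g.
  rewrite (normB2 Hip) act_norm normrZ exprMn (ipZr Hip) real_normK ?num_real //; lra.
rewrite (sup_affine one (B := `|x| * `|t0|)); first by rewrite -/(hx x); lra.
  by move=> g; exact: hx_ub0.
by rewrite mulr_ge0.
Qed.
End ACT.
Section GEO.
Variables (R : realType) (M : completeNormedModType R) (ip : M -> M -> R).
Hypothesis Hip : is_inner_product ip.
Variables (G : Type) (mul : G -> G -> G) (one : G) (inv : G -> G) (act : G -> M -> M).
Hypothesis HA : linear_isometric_group_action mul one inv act.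
Variables (t0 : M) (T : set M).
Hypothesis Htan : tangent_space (group_orbit act t0) t0 T.

Lemma curve v : T v -> forall eta : R, 0 < eta -> forall b : bool,
  exists s g, [/\ 0 < `|s|, `|s| < eta, (if b then 0 < s else s < 0) &
     `|act g t0 - t0 - s *: v| <= eta * `|s|].
Proof.
move: Htan => [U [phi [E [[[oU Ut0 oPU] [C1phi [psi [C1psi psiphi phipsi]] Esub Eeq]] ->]]]].
move=> /= Ev eta eta0 b.
set y0 := phi t0; set e := 'd phi t0 v.
have dphi : differentiable phi t0 by case: C1phi => + _; apply.
have PUy0 : (phi @` U) y0 by exists t0.
have dpsi : differentiable psi y0 by case: C1psi => + _; apply.
have psiy0 : psi y0 = t0 by exact: psiphi.
have key : 'd psi y0 e = v.
  have hn : \forall x \near t0, (psi \o phi) x = id x.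
    have : nbhs t0 U by apply: open_nbhs_nbhs; split.
    by apply: filterS => x Ux /=; exact: psiphi.
  have := near_eq_derive v hn; rewrite derive_id deriveE; last first.
    exact: differentiable_comp.
  by rewrite diff_comp.
have cv : (fun h : R => h^-1 *: ((psi \o shift y0) (h *: e) - psi y0)) @ 0^' --> v.
  rewrite -key -deriveE //; exact: diff_derivable.
have N1 : \forall h \near 0^', `|v - h^-1 *: ((psi \o shift y0) (h *: e) - psi y0)| < eta.
  by move/cvgrPdist_lt : cv; apply.
have N2 : \forall h \near (0 : R), (phi @` U) (h *: e + y0).
  have op : nbhs y0 (phi @` U) by apply: open_nbhs_nbhs; split.
  have cvl : (fun h : R => h *: e + y0) @ (0 : R) --> y0.
    rewrite -[X in _ --> X](add0r y0) -[X in _ --> X + _](scale0r e).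
    apply: cvgD; [exact: cvgZr_tmp cvg_id | exact: cvg_cst].
  exact: cvl op.
have N3 : \forall h \near (0 : R), `|h| < eta.
  by apply/nbhs_norm0P; exists eta.
have N := filterI N1 (filterI (nbhs_dnbhs N2) (nbhs_dnbhs N3)).
have /nbhs_norm0P [d d0 /= Hd] : \forall h \near (0 : R), h != 0 ->
   (`|v - h^-1 *: ((psi \o shift y0) (h *: e) - psi y0)| < eta /\
    ((phi @` U) (h *: e + y0) /\ `|h| < eta)) by exact: N.
have d2 : 0 < d / 2 by rewrite divr_gt0.
pose h : R := if b then d / 2 else - (d / 2).
have nh : `|h| = d / 2 by rewrite /h; case: ifP => _; rewrite ?normrN gtr0_norm.
have hnz : h != 0 by rewrite -normr_eq0 nh gt_eqF.
have [hc [_ hlt]] := Hd h (ltac:(rewrite /= nh; lra)) hnz.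
move: hc; rewrite /= psiy0.
have Ey0 : E y0.
  have : (phi @` (U `&` group_orbit act t0)) y0.
    by exists t0 => //; split => //; exists one => //; exact: act1 HA t0.
  by rewrite Eeq => -[].
have [E0 Elin Ecl] := Esub.
have : (phi @` U `&` E) (h *: e + y0).
  split; first by have [_ [[u Uu phiu] _]] := Hd h (ltac:(rewrite /= nh; lra)) hnz; exists u.
  exact: Elin.
rewrite -Eeq => -[u [Uu [g _ gu]] phiu].
have psiu : psi (h *: e + y0) = act g t0 by rewrite -phiu psiphi // gu.
rewrite psiu => hc.
exists h, g; split => //.
- by rewrite nh.
- by rewrite /h; case: ifP => ->; lra.
have -> : act g t0 - t0 - h *: v = h *: (h^-1 *: (act g t0 - t0) - v).
  by rewrite scalerBr scalerA mulfV // scale1r.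
rewrite normrZ mulrC ler_wpM2r // distrC ltW //.
Qed.
End GEO.
Lemma tangent_orth (R : realType) (M : completeNormedModType R) (ip : M -> M -> R)
  (Hip : is_inner_product ip) (G : Type) (mul : G -> G -> G) (one : G) (inv : G -> G)
  (act : G -> M -> M) (HA : linear_isometric_group_action mul one inv act)
  (t0 : M) (T : set M) (Htan : tangent_space (group_orbit act t0) t0 T) v :
  T v -> ip t0 v = 0.
Proof.
move=> Tv; apply/eqP/negPn/negP => ne.
set a := `|ip t0 v|.
have a0 : 0 < a by rewrite normr_gt0.
set C := 2 * `|t0| + (`|v| + 1) ^+ 2 + 1.
have C0 : 0 < C by rewrite /C; have := normr_ge0 t0; have := sqr_ge0 (`|v| + 1); lra.
set eta := Num.min 1 (a / C).
have eta0 : 0 < eta by rewrite lt_min ltr01 divr_gt0.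
have eta1 : eta <= 1 by rewrite ge_min lexx.
have etaC : eta * C <= a by rewrite -ler_pdivlMr // ge_min lexx orbT.
have [s [g [s0 seta _ hw]]] := curve HA Htan Tv eta0 true.
set w := act g t0 - t0 - s *: v in hw.
set z := s *: v + w.
have hz : act g t0 = t0 + z by rewrite /z /w [s *: v + _]addrC subrK addrC subrK.
have eq0 : 2 * ip t0 z + `|z| ^+ 2 = 0.
  have := normD2 Hip t0 z; rewrite -hz (act_norm HA) => h; lra.
have eq1 : 2 * (s * ip t0 v) = - (2 * ip t0 w + `|z| ^+ 2).
  by move: eq0; rewrite /z (ipDr Hip) (ipZr Hip); lra.
have hZ : `|z| <= `|s| * (`|v| + 1).
  rewrite /z; apply: le_trans (ler_normD _ _) _; rewrite normrZ.
  have : `|w| <= `|s| by apply: le_trans hw _; rewrite -[X in _ <= X]mul1r ler_wpM2r.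
  by move=> h; rewrite mulrDr mulr1 lerD2l.
have hZ2 : `|z| ^+ 2 <= `|s| * eta * (`|v| + 1) ^+ 2.
  have e1 : `|z| ^+ 2 <= (`|s| * (`|v| + 1)) ^+ 2.
    by rewrite lerXn2r ?nnegrE // mulr_ge0 // addr_ge0.
  have e2 : `|s| * `|s| <= `|s| * eta by rewrite ler_wpM2l // ltW.
  have e3 := sqr_ge0 (`|v| + 1).
  move: e1; rewrite exprMn expr2 => e1; nra.
have hw2 : `|ip t0 w| <= `|t0| * (eta * `|s|).
  by apply: le_trans (ip_cs Hip _ _) _; rewrite ler_wpM2l.
have h2 : 2 * (`|s| * a) <= 2 * `|ip t0 w| + `|z| ^+ 2.
  have := congr1 Num.norm eq1; rewrite normrN !normrM (ger0_norm (ler0n _ 2)) -/a => ->.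
  apply: le_trans (ler_normD _ _) _.
  by rewrite normrM (ger0_norm (ler0n _ 2)) (ger0_norm (sqr_ge0 `|z|)).
have : 2 * (`|s| * a) <= `|s| * (eta * C) - `|s| * eta.
  rewrite /C; apply: le_trans h2 _.
  have := normr_ge0 t0; nra.
have : `|s| * (eta * C) <= `|s| * a by rewrite ler_wpM2l.
nra.
Qed.
Lemma tangent_increase (R : realType) (M : completeNormedModType R) (ip : M -> M -> R)
  (Hip : is_inner_product ip) (G : Type) (mul : G -> G -> G) (one : G) (inv : G -> G)
  (act : G -> M -> M) (HA : linear_isometric_group_action mul one inv act)
  (t0 : M) (T : set M) (Htan : tangent_space (group_orbit act t0) t0 T) v x :
  T v -> ip x v != 0 -> ip x t0 < hx ip act t0 x.
Proof.
move=> Tv ne.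
set a := `|ip x v|.
have a0 : 0 < a by rewrite normr_gt0.
set C := 2 * (`|x| + 1).
have C0 : 0 < C by rewrite /C; have := normr_ge0 x; lra.
set eta := Num.min 1 (a / C).
have eta0 : 0 < eta by rewrite lt_min ltr01 divr_gt0.
have etaC : eta * C <= a by rewrite -ler_pdivlMr // ge_min lexx orbT.
have [s [g [s0 seta sgn hw]]] := curve HA Htan Tv eta0 (0 < ip x v).
set w := act g t0 - t0 - s *: v in hw.
have hz : act g t0 = t0 + (s *: v + w) by rewrite /w [s *: v + _]addrC subrK addrC subrK.
have e1 : ip x (act g t0) = ip x t0 + (s * ip x v + ip x w).
  by rewrite hz !(ipDr Hip) (ipZr Hip).
have e2 : s * ip x v = `|s| * a.
  rewrite /a -normrM ger0_norm //; move: sgn; case: ifP => hp hs.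
    by rewrite mulr_ge0 // ltW.
  have hv : ip x v < 0 by rewrite lt_neqAle ne /= leNgt hp.
  nra.
have e3 : `|ip x w| <= `|x| * (eta * `|s|) by apply: le_trans (ip_cs Hip _ _) _; rewrite ler_wpM2l.
have : ip x t0 < ip x (act g t0).
  rewrite e1 e2 ltrDl.
  have : - (`|x| * (eta * `|s|)) <= ip x w by have := e3; rewrite ler_norml => /andP[].
  have : `|s| * (eta * C) <= `|s| * a by rewrite ler_wpM2l.
  rewrite /C; have := normr_ge0 x; nra.
move=> /lt_le_trans; apply.
have := hx_ge Hip HA t0 (inv g) x.
by rewrite -{1}(actV HA g t0) (act_ip Hip HA).
Qed.
Lemma cont_meas (R : realType) (M : completeNormedModType R) (d : measure_display)
  (Omega : measurableType d) (X : Omega -> M) (HX : borel_measurable X)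
  (f : M -> R) : continuous f -> measurable_fun setT (f \o X).
Proof.
move=> cf.
apply: (measurability _ (measurable_realfun.RGenInftyO.measurableE R)).
move=> _ [A [x ->] <-].
rewrite setTI.
have -> : (f \o X) @^-1` `]-oo, x[%classic = X @^-1` (f @^-1` `]-oo, x[%classic) by [].
apply: HX; apply: sub_sigma_algebra.
apply: open_comp; first by move=> y _; exact: cf.
have -> : `]-oo, x[%classic = [set y : R | y < x].
  by apply/seteqP; split => y /=; rewrite in_itv.
exact: open_lt.
Qed.
Lemma pos_integral (R : realType) (d : measure_display) (Omega : measurableType d)
  (P : probability Omega R) (k : Omega -> R) (A : set Omega) :
  measurable A -> measurable_fun setT k ->
  (forall w, 0 <= k w) -> (forall w, A w -> 0 < k w) -> (0 < P A)%E ->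
  (0 < \int[P]_w (k w)%:E)%E.
Proof.
move=> mA mk k0 kA PA.
rewrite lt_neqAle integral_ge0 ?andbT; last by move=> w _; rewrite lee_fin.
apply/negP => /eqP I0.
pose B (n : nat) := [set w | n.+1%:R^-1 < k w].
have mB n : measurable (B n).
  have := mk measurableT `]n.+1%:R^-1, +oo[%classic (measurable_itv _).
  rewrite setTI; congr measurable; apply/seteqP; split => w /=; rewrite in_itv /= andbT //.
have PB n : P (B n) = 0%E.
  have r0 : (0 <= n.+1%:R^-1 :> R) by rewrite invr_ge0.
  have : (n.+1%:R^-1%:E * \int[P]_w (\1_(B n) w)%:E <= \int[P]_w (k w)%:E)%E.
    rewrite -ge0_integralZl_EFin //; last first.
      by apply/measurable_EFinP; exact: measurable_indic.
    apply: (@ge0_le_integral _ _ _ P setT measurableT) => //.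
    - by apply: measurable_funeM; apply: measurableT_comp => //; exact: measurable_indic.
    - by apply: measurableT_comp.
    move=> w _; rewrite indicE; case: (boolP (w \in B n)) => h.
      by rewrite mule1 lee_fin ltW //; move: h; rewrite inE.
    by rewrite mule0 lee_fin.
  rewrite -I0 integral_indic // setIT => h.
  move: h; rewrite -lee_pdivlMl ?invr_gt0 // mule0 => h0.
  by apply/eqP; rewrite eq_le h0 measure_ge0.
have : P.-negligible (\bigcup_n B n).
  by apply: negligible_bigcup => m; exists (B m); split => //; exact: PB.
have sub : A `<=` \bigcup_n B n.
  move=> w /kA kw; have [n hn] := ltr_add_invr kw.
  by exists n => //; rewrite /B /=; move: hn; rewrite add0r.
move=> /(negligibleS sub) /(negligibleP _ mA) PA0.
by move: PA; rewrite PA0 ltxx.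
Qed.
Lemma lip_cont (R : realType) (M : completeNormedModType R) (f : M -> R) (k : R) :
  0 <= k -> (forall x y, `|f x - f y| <= k * `|x - y|) -> continuous f.
Proof.
move=> k0 hf x; apply/cvgrPdist_le => e e0.
apply/nbhs_normP; exists (e / (k + 1)); first by rewrite /= divr_gt0 // ltr_wpDl.
move=> y /= hy; apply: le_trans (hf x y) _.
have k1 : 0 < k + 1 by rewrite ltr_wpDl.
apply: le_trans (_ : k * (e / (k + 1)) <= e).
  by rewrite ler_wpM2l // ltW.
rewrite mulrA ler_pdivrMr //; nra.
Qed.
Section INT.
Variables (R : realType) (d : measure_display) (Omega : measurableType d)
  (P : probability Omega R).
Local Notation integ f := (P.-integrable setT (EFin \o f)).
Definition I (f : Omega -> R) : R := fine (\int[P]_w (f w)%:E)%E.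

Lemma Ifin f : integ f -> (\int[P]_w (f w)%:E)%E = (I f)%:E.
Proof. by move=> h; rewrite /I fineK //; exact: integrable_fin_num h. Qed.

Lemma integ_cst c : integ (fun _ => c).
Proof. exact: finite_measure_integrable_cst. Qed.

Lemma integ_lin a f g : integ f -> integ g -> integ (fun w => a * f w + g w).
Proof.
move=> hf hg.
have := integrableD measurableT (integrableZl measurableT a hf) hg.
by apply: eq_integrable => // w _ /=; rewrite EFinD EFinM.
Qed.

Lemma Icst c : (\int[P]_w (c%:E))%E = c%:E.
Proof.
rewrite (integral_cst P measurableT c%:E).
transitivity (c%:E * 1)%E; last by rewrite mule1.
by congr (_ * _)%E; exact: probability_setT.
Qed.

Lemma Ilin a f g : integ f -> integ g ->
  (\int[P]_w ((a * f w + g w)%:E))%E = (a * I f + I g)%:E.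
Proof.
move=> hf hg.
rewrite (_ : (fun w => (a * f w + g w)%:E) = (EFin \o (fun w => a * f w)) \+ (EFin \o g)); last first.
  by apply/funext => w /=; rewrite EFinD.
rewrite integralD_EFin //; last first.
  by apply: eq_integrable (integrableZl measurableT a hf) => // w _ /=; rewrite EFinM.
rewrite (_ : (EFin \o (fun w => a * f w)) = (fun w => a%:E * (f w)%:E)%E); last first.
  by apply/funext => w /=; rewrite EFinM.
by rewrite integralZl // !Ifin.
Qed.
End INT.
Unset Implicit Arguments. Set Strict Implicit.
Theorem mainTheorem11 (R : realType) (M : completeNormedModType R)
  (ip : M -> M -> R)
  (G : Type) (mul : G -> G -> G) (one : G) (inv : G -> G) (act : G -> M -> M)
  (d : measure_display) (Omega : measurableType d) (P : probability Omega R)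
  (X eps : Omega -> M) (t0 : M) (sigma : R) (T : set M) :
  is_inner_product ip ->
  linear_isometric_group_action mul one inv act ->
  t0 != 0 ->
  0 < sigma ->
  (forall w, X w = t0 + sigma *: eps w) ->
  borel_measurable X ->
  (forall h : M, (\int[P]_w (ip (eps w) h)%:E = 0)%E) ->
  (\int[P]_w (`|X w| ^+ 2)%:E < +oo)%E ->
  C1_submanifold (group_orbit act t0) ->
  tangent_space (group_orbit act t0) t0 T ->
  ((0 < P [set w | ~ orth ip T (X w)])%E <->
   (0 < P [set w | ~ orth ip T (eps w)])%E) /\
  ((0 < P [set w | ~ orth ip T (X w)])%E ->
   ~ is_frechet_mean P act X t0).
Proof.
move=> Hip HA t0ne sig0 HXe Xmeas Heps HX2 _ Htan.
have orthX w : orth ip T (X w) <-> orth ip T (eps w).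
  split => h v Tv; have := h v Tv;
    rewrite HXe (ipDl Hip) (ipZl Hip) (tangent_orth Hip HA Htan Tv) add0r.
    by move/eqP; rewrite mulf_eq0 gt_eqF //= => /eqP.
  by move=> ->; rewrite mulr0.
have Aeq : [set w | ~ orth ip T (X w)] = [set w | ~ orth ip T (eps w)].
  by apply/seteqP; split => w /= h1 h2; apply: h1; apply/orthX.
split; first by rewrite Aeq.
move=> Apos Hmean.
set A := [set w | ~ orth ip T (X w)] in Apos.
have cip v : continuous (fun x => ip x v).
  apply: (@lip_cont _ _ _ `|v|) => // x y.
  by rewrite -(ipBl Hip) mulrC ip_cs.
have chx : continuous (hx ip act t0).
  apply: (@lip_cont _ _ _ `|t0|) => // x y.
  have h1 := hx_lip Hip HA t0 x y; have h2 := hx_lip Hip HA t0 y x.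
  rewrite distrC in h2; rewrite ler_norml mulrC; apply/andP; split; lra.
have mA : measurable A.
  have -> : A = X @^-1` (\bigcup_(v in T) [set x | 0 < `|ip x v|]).
    apply/seteqP; split => w /=.
      move=> h; apply: contrapT => h2; apply: h => v Tv.
      apply: contrapT => hv; apply: h2; exists v => //=; rewrite normr_gt0.
      by apply/eqP.
    by move=> [v Tv /= hv] ho; move: hv; rewrite ho // normr0 ltxx.
  apply: Xmeas; apply: sub_sigma_algebra; apply: bigcup_open => v _.
  have -> : [set x | 0 < `|ip x v|] = (fun x => `|ip x v|) @^-1` [set r : R | 0 < r] by [].
  apply: open_comp; last exact: open_gt.
  move=> x _; apply: continuous_comp; [exact: cip | exact: norm_continuous].
set hX := fun w => hx ip act t0 (X w).
set c := `|t0| ^+ 2.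
have c0 : 0 < c by rewrite exprn_gt0 // normr_gt0.
have mN1 : measurable_fun setT (fun w => `|X w|) := cont_meas Xmeas norm_continuous.
have mN : measurable_fun setT (fun w => `|X w| ^+ 2).
  rewrite (_ : (fun w => _) = (fun w => `|X w| * `|X w|)); last first.
    by apply/funext => w; rewrite expr2.
  exact: measurable_funM.
have mH : measurable_fun setT hX := cont_meas Xmeas chx.
have mI : measurable_fun setT (fun w => ip (X w) t0) := cont_meas Xmeas (cip t0).
have iN : P.-integrable setT (EFin \o (fun w => `|X w| ^+ 2)).
  apply/integrableP; split; first exact/measurable_EFinP.
  rewrite (_ : (fun w => _) = (fun w => (`|X w| ^+ 2)%:E)); first exact: HX2.
  by apply/funext => w /=; rewrite ger0_norm // sqr_ge0.
have iB : P.-integrable setT (EFin \o (fun w => `|X w| ^+ 2 + c)).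
  have := integ_lin 1 iN (integ_cst P c).
  by apply: eq_integrable => // w _ /=; rewrite mul1r.
have dom (f : Omega -> R) : measurable_fun setT f -> (forall w, `|f w| <= `|X w| * `|t0|) ->
    P.-integrable setT (EFin \o f).
  move=> mf hf; apply: le_integrable iB => //; first exact/measurable_EFinP.
  move=> w _ /=; rewrite lee_fin.
  rewrite (ger0_norm (addr_ge0 (sqr_ge0 _) (sqr_ge0 _))).
  apply: le_trans (hf w) _; rewrite /c.
  have := sqr_ge0 (`|X w| - `|t0|); have := normr_ge0 (X w); have := normr_ge0 t0; nra.
have iH := dom hX mH (fun w => hx_norm Hip HA t0 (X w)).
have iI := dom _ mI (fun w => ip_cs Hip (X w) t0).
have Ig r : I P (fun w => `|X w| ^+ 2 + r) = I P (fun w => `|X w| ^+ 2) + r.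
  rewrite {1}/I (_ : (fun w => (`|X w| ^+ 2 + r)%:E) =
     (fun w => (1 * `|X w| ^+ 2 + r)%:E)); last by apply/funext => w; rewrite mul1r.
  rewrite (Ilin 1 iN (integ_cst P r)) /= mul1r; congr (_ + _).
  by rewrite /I Icst.
have Ffor l : 0 <= l -> frechet_fun P act X (l *: t0) =
   ((- (2 * l)) * I P hX + (I P (fun w => `|X w| ^+ 2) + l ^+ 2 * c))%:E.
  move=> l0; rewrite /frechet_fun.
  rewrite (_ : (fun w => _) = (fun w => ((- (2 * l)) * hX w + (`|X w| ^+ 2 + l ^+ 2 * c))%:E)); last first.
    apply/funext => w; rewrite (inf_formula Hip HA _ _ l0) /hX; congr (_%:E).
    rewrite -/c; lra.
  rewrite (Ilin _ iH); first by rewrite Ig.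
  by have := integ_lin 1 iN (integ_cst P (l ^+ 2 * c)); apply: eq_integrable => // w _ /=; rewrite mul1r.
have L : I P (fun w => ip (X w) t0) = c.
  have := Heps t0.
  rewrite (_ : (fun w => (ip (eps w) t0)%:E) =
     (fun w => (sigma^-1 * ip (X w) t0 + (- (sigma^-1 * c)))%:E)); last first.
    apply/funext => w; rewrite HXe (ipDl Hip) (ipZl Hip) (ipxx Hip) -/c; congr (_%:E).
    rewrite mulrDr mulKf ?gt_eqF //; lra.
  rewrite (Ilin _ iI (integ_cst P _)) /I Icst /= => /eqP; rewrite eqe => /eqP h.
  have : sigma^-1 * (fine (\int[P]_w (ip (X w) t0)%:E) - c) = 0 by rewrite mulrBr.
  move/eqP; rewrite mulf_eq0 invr_eq0 gt_eqF //= subr_eq0 => /eqP.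
  by rewrite -/(I P _).
have Hgt : c < I P hX.
  have := @pos_integral _ _ _ P (fun w => hX w - ip (X w) t0) A mA.
  have m2 : measurable_fun setT (fun w => hX w - ip (X w) t0) by exact: measurable_funB.
  move=> /(_ m2 _ _ Apos).
  have -> : (fun w => (hX w - ip (X w) t0)%:E) = (fun w => ((-1) * ip (X w) t0 + hX w)%:E).
    by apply/funext => w; congr (_%:E); lra.
  rewrite (Ilin _ iI iH) L lte_fin.
  have H1 : forall w, 0 <= hX w - ip (X w) t0.
    by move=> w; rewrite subr_ge0; apply: (hx_ge1 Hip HA).
  have H2 : forall w, A w -> 0 < hX w - ip (X w) t0.
    move=> w /= hw; rewrite subr_gt0.
    have [v Tv hv] : exists2 v, T v & ip (X w) v != 0.
      apply: contrapT => hn; apply: hw => v Tv; apply/eqP; apply: contrapT => hv.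
      by apply: hn; exists v => //; apply/negP.
    exact: (tangent_increase Hip HA Htan Tv hv).
  move=> /(_ H1 H2); lra.
have := Hmean ((I P hX / c) *: t0).
rewrite -[X in frechet_fun _ _ _ X](scale1r t0) !Ffor //; last by rewrite divr_ge0 // ltW // (lt_trans c0).
rewrite lee_fin.
set h := I P hX; set n := I P _.
have lc : h / c * c = h by rewrite divfK // gt_eqF.
have e : (h / c) ^+ 2 * c = (h / c) * h by rewrite expr2 -mulrA lc.
rewrite e expr1n mul1r -/h in Hgt *.
move: lc; set l := h / c => lc H.
nra.
Qed.
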